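(* Let $\varphi:\mathbb{M}(n)\to\mathbb{C}$ be a positive unital linear functional, let $M>0$, and let $A\in\mathbb{M}(n)$ be Hermitian with $0\le A\le MI$. Then $$0\le\det\begin{pmatrix}\varphi(A)&\varphi(A^2)\\ \varphi(A^2)&\varphi(A^3)\end{pmatrix}\le\frac{M^4}{27}.$$
   Context: $\mathbb{M}(n)$ is the algebra of $n\times n$ complex matrices. A linear functional $\varphi$ on $\mathbb{M}(n)$ is positive if $\varphi(A)\ge0$ whenever $A$ is positive semidefinite, and unital if $\varphi(I)=1$. The order $0\le A\le MI$ is the Loewner order ($A$ and $MI-A$ positive semidefinite). *)

(* Defs.v *)
From HB Require Import structures.
From mathcomp Require Import all_boot all_order all_algebra.
Set Implicit Arguments. Unset Strict Implicit. Unset Printing Implicit Defensive.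
Import Order.TTheory GRing.Theory Num.Theory.
Local Open Scope ring_scope.

Definition adjmx (C : numClosedFieldType) m n (A : 'M[C]_(m, n)) : 'M[C]_(n, m) :=
  (map_mx Num.conj A)^T.

Definition psdmx (C : numClosedFieldType) n (A : 'M[C]_n) : Prop :=
  adjmx A = A /\ forall x : 'cV[C]_n, 0 <= (adjmx x *m A *m x) 0 0.

Definition loewner_le (C : numClosedFieldType) n (A B : 'M[C]_n) : Prop :=
  psdmx (B - A).

Definition linear_functional (C : numClosedFieldType) n (phi : 'M[C]_n -> C) : Prop :=
  forall (a : C) (A B : 'M[C]_n), phi (a *: A + B) = a * phi A + phi B.

Definition positive_functional (C : numClosedFieldType) n (phi : 'M[C]_n -> C) : Prop :=
  forall A : 'M[C]_n, psdmx A -> 0 <= phi A.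

Definition unital_functional (C : numClosedFieldType) n (phi : 'M[C]_n -> C) : Prop :=
  phi 1%:M = 1.

(* Main.v *)
Require Import Defs.
From HB Require Import structures.
From mathcomp Require Import all_boot all_order all_algebra ring.
Import Order.TTheory GRing.Theory Num.Theory.
Local Open Scope ring_scope.

Lemma det22 (C : comNzRingType) (f : nat -> nat -> C) :
  \det (\matrix_(i < 2, j < 2) f i j) = f 0%N 0%N * f 1%N 1%N - f 0%N 1%N * f 1%N 0%N.
Proof.
rewrite (expand_det_row _ ord0) !big_ord_recl big_ord0 /cofactor !mxE /=.
rewrite !det_mx11 !mxE /bump /=. ring.
Qed.

Section S.
Variables (C : numClosedFieldType) (n : nat) (phi : 'M[C]_n.+1 -> C).
Hypothesis lin : linear_functional phi.

Lemma phi0 : phi 0 = 0.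
Proof. have := lin 1 0 0; rewrite scaler0 addr0 mul1r => h. by apply: (addrI (phi 0)); rewrite addr0 -h. Qed.
Lemma phiD X Y : phi (X + Y) = phi X + phi Y.
Proof. by rewrite -[X in phi (X + _)]scale1r lin mul1r. Qed.
Lemma phiZ a X : phi (a *: X) = a * phi X.
Proof. by rewrite -[a *: X]addr0 lin phi0 addr0. Qed.
Lemma phiN X : phi (- X) = - phi X.
Proof. by rewrite -scaleN1r phiZ mulN1r. Qed.
Lemma phiB X Y : phi (X - Y) = phi X - phi Y.
Proof. by rewrite phiD phiN. Qed.

Variable A : 'M[C]_n.+1.

Lemma expQ al be :
  phi ((al%:M + be *: A) *m A *m (al%:M + be *: A)) =
  al ^+ 2 * phi A + 2%:R * al * be * phi (A *m A) + be ^+ 2 * phi (A *m A *m A).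
Proof.
rewrite !(mulmxDl, mulmxDr, mul_scalar_mx, mul_mx_scalar).
do 3 rewrite -?scalemxAl -?scalemxAr ?scalerA ?phiZ ?phiD ?phiN. rewrite -!mulmxA. ring.
Qed.

Lemma expR (m : C) al be :
  phi ((al%:M + be *: A) *m (m%:M - A) *m (al%:M + be *: A)) =
  al ^+ 2 * m * phi 1%:M + (2%:R * al * be * m - al ^+ 2) * phi A
   + (be ^+ 2 * m - 2%:R * al * be) * phi (A *m A) - be ^+ 2 * phi (A *m A *m A).
Proof.
rewrite !(mulmxDl, mulmxDr, mulmxN, mulNmx, mulmxBl, mulmxBr, mul_scalar_mx, mul_mx_scalar).
do 3 rewrite -?scalemxAl -?scalemxAr ?scalerA ?phiZ ?phiD ?phiN ?scaleNr. rewrite -!mulmxA mulmxBl mul_scalar_mx phiB phiZ -[m%:M]scalemx1 phiZ. ring. Qed.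
End S.

Lemma adjmxK (C : numClosedFieldType) m n (X : 'M[C]_(m, n)) : adjmx (adjmx X) = X.
Proof. by apply/matrixP=> i j; rewrite !mxE conjCK. Qed.

Lemma adjmxM (C : numClosedFieldType) m n p (X : 'M[C]_(m, n)) (Y : 'M[C]_(n, p)) :
  adjmx (X *m Y) = adjmx Y *m adjmx X.
Proof. by rewrite /adjmx map_mxM trmx_mul. Qed.

Lemma psd_congr (C : numClosedFieldType) n (P B : 'M[C]_n) :
  psdmx P -> psdmx (adjmx B *m P *m B).
Proof.
move=> [hP pP]; split.
  by rewrite !adjmxM adjmxK hP mulmxA.
move=> x; have := pP (B *m x).
by rewrite adjmxM !mulmxA.
Qed.

Lemma herm_lin (C : numClosedFieldType) n (A : 'M[C]_n) (al be : C) :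
  adjmx A = A -> al \is Num.real -> be \is Num.real ->
  adjmx (al%:M + be *: A) = al%:M + be *: A.
Proof.
move=> hA ra rb; apply/matrixP=> i j.
have hij : A i j = (A j i)^* by rewrite -{1}hA !mxE.
by rewrite !mxE rmorphD rmorphMn rmorphM /= (conj_Creal ra) (conj_Creal rb) hij eq_sym.

Qed.

Lemma ge0_eq (C : numDomainType) (x y : C) : 0 <= x -> x = y -> 0 <= y.
Proof. by move=> h <-. Qed.
Arguments ge0_eq {C x y}.

Theorem theorem3p2 (C : numClosedFieldType) (n : nat) (phi : 'M[C]_n -> C)
  (M : C) (A : 'M[C]_n) :
  linear_functional phi -> positive_functional phi -> unital_functional phi ->
  0 < M ->
  adjmx A = A -> loewner_le 0 A -> loewner_le A (M%:M) ->
  0 <= \det (\matrix_(i < 2, j < 2) phi (A ^+ (i + j).+1)) /\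
  \det (\matrix_(i < 2, j < 2) phi (A ^+ (i + j).+1)) <= M ^+ 4 / 27%:R.
Proof.
move=> lin pos uni M0 hA h0 hM.
case: n phi A lin pos uni hA h0 hM => [|n] phi A lin pos uni hA h0 hM.
  exfalso; have := lin 1 0 0; rewrite scaler0 addr0 mul1r => h.
  have p0 : phi 0 = 0 by apply: (addrI (phi 0)); rewrite addr0 -h.
  move: uni; rewrite /unital_functional (flatmx0 1%:M) p0 => /eqP.
  by rewrite eq_sym oner_eq0.
rewrite (@det22 C (fun i j => phi (A ^+ (i + j).+1))) /= expr1 (exprS A 2) expr2 -!mulmxE mulmxA.
set a := phi A; set b := phi (A *m A); set c := phi (A *m A *m A).
rewrite /loewner_le subr0 in h0.
have hQ al be : al \is Num.real -> be \is Num.real ->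
    0 <= al ^+ 2 * a + 2%:R * al * be * b + be ^+ 2 * c.
  move=> ra rb; rewrite /a /b /c -expQ //.
  have := pos _ (@psd_congr _ _ _ (al%:M + be *: A) h0).
  by rewrite herm_lin.
have hR al be : al \is Num.real -> be \is Num.real ->
    0 <= al ^+ 2 * M * 1 + (2%:R * al * be * M - al ^+ 2) * a
      + (be ^+ 2 * M - 2%:R * al * be) * b - be ^+ 2 * c.
  move=> ra rb; rewrite /a /b /c.
  have := pos _ (@psd_congr _ _ _ (al%:M + be *: A) hM).
  by rewrite herm_lin // (expR _ _ _ lin) uni.
have r1 : (1 : C) \is Num.real by apply: rpred1.
have r0 : (0 : C) \is Num.real by apply: rpred0.
have ha : 0 <= a by apply: (ge0_eq (hQ 1 0 r1 r0)); ring.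
have hc : 0 <= c by apply: (ge0_eq (hQ 0 1 r0 r1)); ring.
have ra : a \is Num.real by apply: ger0_real.
have rc : c \is Num.real by apply: ger0_real.
have rb : b \is Num.real.
  have h := ger0_real (hQ 1 1 r1 r1).
  have -> : b = ((1 ^+ 2 * a + 2%:R * 1 * 1 * b + 1 ^+ 2 * c) - a - c) / 2%:R.
    by field.
  by apply: rpredM; [apply: rpredB; [apply: rpredB|] | rewrite rpredV realn].
have rM : M \is Num.real by apply: gtr0_real.
have rN : forall x : C, x \is Num.real -> - x \is Num.real by move=> x; rewrite rpredN.
split.
  have q1 := hQ b (- a) rb (rN _ ra).
  have q2 := hQ c (- b) rc (rN _ rb).
  have [ac0|ac0] := eqVneq (a + c) 0.
    have a0 : a = 0.
      apply/le_anti; rewrite ha andbT.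
      by rewrite -(addr0 a) -{2}ac0 lerD2l.
    have c0 : c = 0 by move: ac0; rewrite a0 add0r.
    have q3 := hQ 1 (- b) r1 (rN _ rb).
    rewrite a0 c0 in q3 *.
    apply: (ge0_eq (divr_ge0 q3 (ler0n _ 2))).
    by field.
  have acp : 0 < a + c by rewrite lt_def ac0 addr_ge0.
  rewrite -(pmulr_rge0 _ acp).
  by apply: (ge0_eq (addr_ge0 q1 q2)); ring.
have hK := hR (- M) 3%:R (rN _ rM) (realn _ 3).
have hT := hQ (- (5%:R * M)) 6%:R (rN _ (rpredM (realn _ 5) rM)) (realn _ 6).
have hT4 : 0 <= (- (5%:R * M)) ^+ 2 * a + 2%:R * - (5%:R * M) * 6%:R * b + 6%:R ^+ 2 * c
    + 3%:R * M ^+ 2 * a.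
  apply: addr_ge0 => //; apply: mulr_ge0 => //; apply: mulr_ge0 => //.
  by apply: exprn_ge0; apply: ltW.
set K := (X in 0 <= X) in hK.
set T4 := (X in 0 <= X) in hT4.
set S1 := 18%:R * c + 11%:R * M ^+ 2 * a - 30%:R * M * b.
set S2 := 6%:R * M * b - 5%:R * M ^+ 2 * a.
have rS1 : S1 \is Num.real by rewrite ?(rpredN, rpredM, rpredD, rpredB, rpredX, realn).
have rS2 : S2 \is Num.real by rewrite ?(rpredN, rpredM, rpredD, rpredB, rpredX, realn).
rewrite -subr_ge0.
have -> : M ^+ 4 / 27%:R - (a * c - b * b) =
    (K * (4%:R * M ^+ 3 + T4) + S1 ^+ 2 + 3%:R * S2 ^+ 2) / (108%:R * M ^+ 2).
  by rewrite /K /T4 /S1 /S2; field; rewrite gt_eqF.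
apply: divr_ge0; last first.
  by apply: mulr_ge0; [apply: ler0n | apply: exprn_ge0; apply: ltW].
apply: addr_ge0; [apply: addr_ge0|].
- apply: mulr_ge0 => //; apply: addr_ge0 => //; apply: mulr_ge0 => //.
  by apply: exprn_ge0; apply: ltW.
- exact: real_exprn_even_ge0.
- by apply: mulr_ge0 => //; apply: real_exprn_even_ge0.
Qed.
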